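(* Let $n\ge1$ and let $T\in\mathcal{L}(\mathcal{H})$ be $n$-EP. If $T$ is regular, then $T$ is invertible.
   Context: $\mathcal{H}$ is a Hilbert space, $\mathcal{L}(\mathcal{H})$ the bounded operators on it; $N(\cdot)$ and $R(\cdot)$ denote kernel and range. $T$ is regular if $T$ has closed range and $N(T)\subset R(T^k)$ for every integer $k\ge0$. For $T$ with closed range, $T^\dagger$ is its Moore–Penrose inverse (unique solution of $TT^\dagger T=T$, $T^\dagger TT^\dagger=T^\dagger$, $(T^\dagger T)^*=T^\dagger T$, $(TT^\dagger)^*=TT^\dagger$). $T$ is $n$-EP if it has closed range and $T^nT^\dagger=T^\dagger T^n$. *)

(* Defs.v *)
From mathcomp Require Import all_boot all_order all_algebra.
From mathcomp Require Import reals complex.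
Set Implicit Arguments. Unset Strict Implicit. Unset Printing Implicit Defensive.
Import Order.TTheory GRing.Theory Num.Theory.
Local Open Scope ring_scope.

Section Hilbert.
Variables (R : realType) (V : lmodType R[i]) (ip : V -> V -> R[i]).

Definition inner_product_axioms : Prop :=
  [/\ (forall (a : R[i]) (x y z : V), ip (a *: x + y) z = a * ip x z + ip y z),
      (forall x y : V, ip y x = (ip x y)^*),
      (forall x : V, 0 <= ip x x) &
      (forall x : V, ip x x = 0 -> x = 0)].

(* induced norm ||x|| = sqrt <x,x> (real part, <x,x> being real >= 0) *)
Definition hnorm (x : V) : R := Num.sqrt (complex.Re (ip x x)).

Definition hconverges (u : nat -> V) (v : V) : Prop :=
  forall e : R, 0 < e -> exists N : nat, forall k, (N <= k)%N -> hnorm (u k - v) < e.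

Definition hcauchy (u : nat -> V) : Prop :=
  forall e : R, 0 < e -> exists N : nat,
    forall k l, (N <= k)%N -> (N <= l)%N -> hnorm (u k - u l) < e.

Definition is_hilbert : Prop :=
  inner_product_axioms /\ (forall u, hcauchy u -> exists v, hconverges u v).

Definition bounded_op (T : V -> V) : Prop :=
  (forall (a : R[i]) (x y : V), T (a *: x + y) = a *: T x + T y) /\
  exists M : R, forall x, hnorm (T x) <= M * hnorm x.

Definition op_kernel (T : V -> V) (x : V) : Prop := T x = 0.
Definition op_range (T : V -> V) (y : V) : Prop := exists x, y = T x.

Definition closed_range (T : V -> V) : Prop :=
  forall (u : nat -> V) (y : V),
    (forall k, op_range T (u k)) -> hconverges u y -> op_range T y.

Definition op_pow (T : V -> V) (k : nat) : V -> V := fun x => iter k T x.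

Definition regular (T : V -> V) : Prop :=
  closed_range T /\
  forall (k : nat) (x : V), op_kernel T x -> op_range (op_pow T k) x.

(* A* = A, expressed through the inner product *)
Definition selfadjoint (A : V -> V) : Prop :=
  forall x y, ip (A x) y = ip x (A y).

Definition moore_penrose (T S : V -> V) : Prop :=
  [/\ bounded_op S,
      (forall x, T (S (T x)) = T x),
      (forall x, S (T (S x)) = S x),
      selfadjoint (fun x => S (T x)) &
      selfadjoint (fun x => T (S x))].

Definition n_EP (n : nat) (T : V -> V) : Prop :=
  closed_range T /\
  exists S, moore_penrose T S /\
    forall x, op_pow T n (S x) = S (op_pow T n x).

Definition invertible_op (T : V -> V) : Prop :=
  exists S, bounded_op S /\ (forall x, S (T x) = x) /\ (forall x, T (S x) = x).

End Hilbert.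

(* Main.v *)
Require Import Defs.
From mathcomp Require Import all_boot all_order all_algebra.
From mathcomp Require Import reals complex.
Import GRing.Theory.
Local Open Scope ring_scope.

Lemma lin0 (R : realType) (V : lmodType R[i]) (f : V -> V) :
  (forall (a : R[i]) (x y : V), f (a *: x + y) = a *: f x + f y) -> f 0 = 0.
Proof.
move=> L; have H := L 1 0 0; rewrite !scale1r !addr0 in H.
have := congr1 (fun v => v - f 0) H; by rewrite /= subrr addrK => <-.
Qed.

Lemma linB (R : realType) (V : lmodType R[i]) (f : V -> V) :
  (forall (a : R[i]) (x y : V), f (a *: x + y) = a *: f x + f y) ->
  forall a b, f (a - b) = f a - f b.
Proof.
move=> L a b.
by rewrite [a - b]addrC -[- b]scaleN1r L scaleN1r addrC.
Qed.

Arguments lin0 {R V f}.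
Arguments linB {R V f}.

Theorem mainTheorem20 (R : realType) (V : lmodType R[i]) (ip : V -> V -> R[i])
  (HV : is_hilbert ip) (n : nat) (T : V -> V) :
  (1 <= n)%N -> bounded_op ip T -> n_EP ip n T -> regular ip T ->
  invertible_op ip T.
Proof.
case: n => [//|m] _ [LT _] [_ [S [[[LS BS] TST STS _ _] EP]]] [_ Reg].
have T0 := (lin0 LT); have S0 := (lin0 LS).
rewrite /op_pow in EP Reg.
have kerT : forall x, T x = 0 -> x = 0.
  move=> x Tx; have [y Ey] := Reg m.+1 x Tx; rewrite /op_pow in Ey; rewrite Ey in Tx *.
  have E : S (T (iter m.+1 T y)) = iter m.+1 T y.
    by rewrite -iterS iterSr -EP iterSr TST -iterSr.
  by rewrite -E Tx S0.
have injT : forall a b, T a = T b -> a = b.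
  by move=> a b H; apply/eqP; rewrite -subr_eq0; apply/eqP/kerT; rewrite (linB LT) H subrr.
have ST : forall x, S (T x) = x by move=> x; apply: injT; rewrite TST.
exists S; split; first by split.
split=> // z.
set w := z - T (S z).
have Sw : S w = 0 by rewrite /w (linB LS) ST subrr.
have itw : iter m T w = 0.
  by rewrite -[LHS]ST -iterS -EP Sw; elim: (m.+1) => //= k ->; rewrite T0.
have w0 : w = 0.
  have it0 : forall k w, iter k T w = 0 -> w = 0.
    by elim=> // k IH w0 H; apply: kerT; apply: IH; rewrite -iterSr.
  exact: it0 itw.
by apply/eqP; rewrite eq_sym -subr_eq0 -/w w0.
Qed.
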